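(* Let $d_{2,P}(t,x)=x^4+2t^2x^2-8t^2x+t^4-t(4x^3-4t^2x+4t^2)$. If $t_0,x_0\in\mathbb Z$ satisfy $d_{2,P}(t_0,x_0)=0$, then for some $n\in\mathbb Z$, $t_0$ is given by one of the following: (1) $t_0=64(u v^3+3v^4)$ with $u=\frac{(1+\sqrt2)^{2n}+(1-\sqrt2)^{2n}}{2}$, $v=\frac{(1+\sqrt2)^{2n}-(1-\sqrt2)^{2n}}{4\sqrt2}$; (2) $t_0=4(uv^3+3v^4)$ with $u=(1+\sqrt2)^{2n+1}+(1-\sqrt2)^{2n+1}$, $v=\frac{(1+\sqrt2)^{2n+1}-(1-\sqrt2)^{2n+1}}{2\sqrt2}$; (3) $t_0=uv^3+3v^4$ with $u=\sqrt2\big((1+\sqrt2)^{2n+1}-(1-\sqrt2)^{2n+1}\big)$, $v=\frac{(1+\sqrt2)^{2n+1}+(1-\sqrt2)^{2n+1}}{2}$; (4) $t_0=uv^3+3v^4$ with $u=\sqrt2\big((1+\sqrt2)^{2n}-(1-\sqrt2)^{2n}\big)$, $v=\frac{(1+\sqrt2)^{2n}+(1-\sqrt2)^{2n}}{2}$. *)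

(* Defs.v *)
From Stdlib Require Import ZArith Reals.

Open Scope Z_scope.

Definition d2P (t x : Z) : Z :=
  x^4 + 2*t^2*x^2 - 8*t^2*x + t^4 - t*(4*x^3 - 4*t^2*x + 4*t^2).

Close Scope Z_scope.
Open Scope R_scope.

Definition alpha : R := 1 + sqrt 2.
Definition beta : R := 1 - sqrt 2.

Definition F (u v : R) : R := u * v^3 + 3 * v^4.

(* Main.v *)
Require Import Defs.
From Stdlib Require Import ZArith Reals Lia Lra.
From Stdlib.Reals Require Import Nsatz.
Open Scope R_scope.

Lemma sqdiv (a K N : Z) : a <> 0%Z -> (K*K = a*a*N)%Z -> exists s, (N = s*s /\ K = a*s)%Z.
Proof.
  intros ha hK.
  set (g := Z.gcd K a).
  assert (hg : g <> 0%Z) by (unfold g; intro H; apply Z.gcd_eq_0 in H; lia).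
  destruct (Z.gcd_divide_l K a) as [k hk].
  destruct (Z.gcd_divide_r K a) as [c hc].
  fold g in hk, hc.
  assert (hcop : Z.gcd k c = 1%Z).
  { assert (Hk : (K / g = k)%Z) by (rewrite hk; apply Z.div_mul; auto).
    assert (Hc : (a / g = c)%Z) by (rewrite hc; apply Z.div_mul; auto).
    rewrite <- Hk, <- Hc. apply Z.gcd_div_gcd; auto. }
  assert (hkc : (k*k = c*c*N)%Z).
  { apply (Z.mul_reg_l _ _ (g*g)); [lia|]. rewrite hk, hc in hK. nia. }
  assert (hd : (c | k*k)%Z) by (exists (c*N)%Z; rewrite hkc; ring).
  apply Z.gauss in hd; [| rewrite Z.gcd_comm; auto].
  assert (h1 : (c | 1)%Z) by (rewrite <- hcop; apply Z.gcd_greatest; auto; apply Z.divide_refl).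
  apply Z.divide_1_r in h1. destruct h1 as [-> | ->].
  - exists k. split; lia.
  - exists (-k)%Z. split; lia.
Qed.

Lemma intpart t x : d2P t x = 0%Z -> t = 0%Z \/
  exists m w, (m*m - 2*w*w = 1 /\ 4*t = (m-3)*(3*m-1-4*w))%Z.
Proof.
  unfold d2P. intro h.
  destruct (Z.eq_dec t 0) as [->|ht]; [now left|right].
  destruct (sqdiv (2*t) (x*x-2*t*x-t*t) (2*x+t)) as [s [hs hE]]; [lia| |].
  { assert (H : ((x*x-2*t*x-t*t)*(x*x-2*t*x-t*t) - 2*t*(2*t)*(2*x+t) =
      x^4 + 2*t^2*x^2 - 8*t^2*x + t^4 - t*(4*x^3 - 4*t^2*x + 4*t^2))%Z) by ring. lia. }
  assert (ht' : (t = s*s - 2*x)%Z) by lia. subst t.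
  assert (hs0 : s <> 0%Z).
  { intro; subst s. assert ((x*x = 0)%Z) by (ring_simplify in hE; lia). assert (x = 0%Z) by nia. lia. }
  destruct (sqdiv s (x + s*s + 2*s) (2*(s+1)*(s+2))) as [w [hw hy]]; [auto| |].
  { assert (H : ((x + s*s + 2*s)*(x + s*s + 2*s) - s*s*(2*(s+1)*(s+2)) =
       (x * x - 2 * (s * s - 2 * x) * x - (s * s - 2 * x) * (s * s - 2 * x)) - 2 * (s * s - 2 * x) * s)%Z) by ring.
    lia. }
  exists (2*s+3)%Z, w. split.
  - assert (H: ((2*s+3)*(2*s+3) - 2*w*w - 1 = 2*(s+1)*(s+2)*2 - 2*(w*w))%Z) by ring. lia.
  - assert (hx : (x = s*w - s*s - 2*s)%Z) by lia. subst x. ring.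
Qed.

Lemma hr : sqrt 2 * sqrt 2 = 2.
Proof. apply sqrt_sqrt; lra. Qed.

Lemma alpha_nz : alpha <> 0.
Proof. unfold alpha. pose proof (sqrt_pos 2). lra. Qed.

Lemma beta_nz : beta <> 0.
Proof. unfold beta. intro H. assert (sqrt 2 = 1) by lra. pose proof hr. rewrite H0 in H1. lra. Qed.

Lemma ab : alpha * beta = -1.
Proof. unfold alpha, beta. pose proof hr. nsatz. Qed.

Lemma pm1_even z : powerRZ (-1) (z+z) = 1.
Proof.
  rewrite powerRZ_add by lra. rewrite <- powerRZ_mult.
  replace (-1 * -1) with 1 by ring. apply powerRZ_R1.
Qed.

Lemma prod_even z : powerRZ alpha (2*z) * powerRZ beta (2*z) = 1.
Proof. rewrite <- powerRZ_mult, ab. replace (2*z)%Z with (z+z)%Z by ring. apply pm1_even. Qed.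

Lemma prod_odd z : powerRZ alpha (2*z+1) * powerRZ beta (2*z+1) = -1.
Proof.
  rewrite <- powerRZ_mult, ab. replace (2*z)%Z with (z+z)%Z by ring.
  rewrite powerRZ_add by lra. rewrite pm1_even. simpl. ring.
Qed.

Lemma pow2 x : powerRZ x 2 = x * x.
Proof. simpl. ring. Qed.

Lemma swapA z : powerRZ alpha (2*(-z)) = powerRZ beta (2*z).
Proof.
  assert (H1 : powerRZ alpha (2*(-z)) * powerRZ alpha (2*z) = 1).
  { rewrite <- powerRZ_add by apply alpha_nz. replace (2*-z + 2*z)%Z with 0%Z by ring. reflexivity. }
  pose proof (prod_even z). nsatz.
Qed.

Lemma swapB z : powerRZ beta (2*(-z)) = powerRZ alpha (2*z).
Proof.
  assert (H1 : powerRZ beta (2*(-z)) * powerRZ beta (2*z) = 1).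
  { rewrite <- powerRZ_add by apply beta_nz. replace (2*-z + 2*z)%Z with 0%Z by ring. reflexivity. }
  pose proof (prod_even z). nsatz.
Qed.

Lemma pwk x k : (x*x)^k = powerRZ x (2*Z.of_nat k).
Proof.
  replace (2*Z.of_nat k)%Z with (Z.of_nat (2*k)) by lia.
  rewrite <- pow_powerRZ, pow_mult. simpl. rewrite Rmult_1_r. reflexivity.
Qed.

Lemma pell_pos (N : nat) : forall m w, (0 < m)%Z -> (0 <= w)%Z -> (Z.to_nat w <= N)%nat ->
  (m*m - 2*w*w = 1)%Z -> exists k, IZR m + IZR w * sqrt 2 = (alpha*alpha)^k /\
                                 IZR m - IZR w * sqrt 2 = (beta*beta)^k.
Proof.
  induction N as [|N IH]; intros m w hm hw hN hp.
  - assert (w = 0%Z) by lia. subst w. assert (m = 1%Z) by nia. subst m.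
    exists 0%nat. simpl. split; ring.
  - destruct (Z.eq_dec w 0) as [->|hw0].
    + assert (m = 1%Z) by nia. subst m. exists 0%nat. simpl. split; ring.
    + assert (hw2 : (2 <= w)%Z).
      { destruct (Z.eq_dec w 1); [subst w; assert (m <= 1 \/ 2 <= m)%Z as [|] by lia; nia | lia]. }
      assert (h1 : (0 < 3*m - 4*w)%Z).
      { assert (((3*m-4*w)*(3*m+4*w) = 9 + 2*w*w)%Z) by nia. nia. }
      assert (h2 : (0 <= 3*w - 2*m)%Z).
      { assert (((3*w-2*m)*(3*w+2*m) = w*w - 4)%Z) by nia. nia. }
      assert (h3 : (3*w - 2*m < w)%Z).
      { assert (((m-w)*(m+w) = 1 + w*w)%Z) by nia. nia. }
      destruct (IH (3*m-4*w)%Z (3*w-2*m)%Z h1 h2) as [k [hk1 hk2]]; [ | nia |]; [ apply Nat.lt_succ_r; apply Nat.lt_le_trans with (Z.to_nat w); [apply Z2Nat.inj_lt; lia | exact hN] | ].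
      exists (S k). rewrite <- tech_pow_Rmult, <- tech_pow_Rmult, <- hk1, <- hk2.
      rewrite !minus_IZR, !mult_IZR. unfold alpha, beta. pose proof hr. split; nsatz.
Qed.

Lemma pell m w : (m*m - 2*w*w = 1)%Z -> exists e j, (e = 1 \/ e = -1) /\
   IZR m + IZR w * sqrt 2 = e * powerRZ alpha (2*j) /\
   IZR m - IZR w * sqrt 2 = e * powerRZ beta (2*j).
Proof.
  intro hp.
  destruct (pell_pos (Z.to_nat (Z.abs w)) (Z.abs m) (Z.abs w)) as [k [hk1 hk2]]; [ | lia | lia | | ].
  { destruct (Z.eq_dec m 0); [subst; nia | lia]. }
  { destruct (Z.abs_spec m) as [[_ ->]|[_ ->]]; destruct (Z.abs_spec w) as [[_ ->]|[_ ->]]; nia. }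
  rewrite !pwk in *.
  destruct (Z.abs_spec m) as [[hm Hm]|[hm Hm]]; rewrite Hm in hk1, hk2;
  destruct (Z.abs_spec w) as [[hw Hw]|[hw Hw]]; rewrite Hw in hk1, hk2; rewrite ?opp_IZR in hk1, hk2.
  - exists 1, (Z.of_nat k). split; [auto|]. split; lra.
  - exists 1, (- Z.of_nat k)%Z. split; [auto|]. rewrite swapA, swapB. split; lra.
  - exists (-1), (- Z.of_nat k)%Z. split; [auto|]. rewrite swapA, swapB. split; lra.
  - exists (-1), (Z.of_nat k). split; [auto|]. split; lra.
Qed.

Lemma c1 r a b M W T u v : r*r = 2 -> a*b = 1 -> M + W*r = 1*(a*a*((1+r)*(1+r))) -> M - W*r = 1*(b*b*((1-r)*(1-r))) ->
  4*T = (M-3)*(3*M-1-4*W) -> 2*u = a+b -> 4*r*v = a-b -> T = 64*(u*v^3+3*v^4).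
Proof. intros. replace (v^3) with (v*v*v) by ring. replace (v^4) with (v*v*v*v) by ring. nsatz. Qed.
Lemma c4 r a b M W T u v : r*r = 2 -> a*b = 1 -> M + W*r = -1*(a*a*((1+r)*(1+r))) -> M - W*r = -1*(b*b*((1-r)*(1-r))) ->
  4*T = (M-3)*(3*M-1-4*W) -> u = r*(a-b) -> 2*v = a+b -> T = (u*v^3+3*v^4).
Proof. intros. replace (v^3) with (v*v*v) by ring. replace (v^4) with (v*v*v*v) by ring. nsatz. Qed.
Lemma c3 r a b M W T u v : r*r = 2 -> a*b = -1 -> M + W*r = 1*(a*a*((1+r)*(1+r))) -> M - W*r = 1*(b*b*((1-r)*(1-r))) ->
  4*T = (M-3)*(3*M-1-4*W) -> u = r*(a-b) -> 2*v = a+b -> T = (u*v^3+3*v^4).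
Proof. intros. replace (v^3) with (v*v*v) by ring. replace (v^4) with (v*v*v*v) by ring. nsatz. Qed.
Lemma c2 r a b M W T u v : r*r = 2 -> a*b = -1 -> M + W*r = -1*(a*a*((1+r)*(1+r))) -> M - W*r = -1*(b*b*((1-r)*(1-r))) ->
  4*T = (M-3)*(3*M-1-4*W) -> u = a+b -> 2*r*v = a-b -> T = 4*(u*v^3+3*v^4).
Proof. intros. replace (v^3) with (v*v*v) by ring. replace (v^4) with (v*v*v*v) by ring. nsatz. Qed.

Theorem proposition4p7 (t0 x0 : Z) :
  d2P t0 x0 = 0%Z ->
  exists n : Z,
    (IZR t0 = 64 * F
        ((powerRZ alpha (2*n) + powerRZ beta (2*n)) / 2)
        ((powerRZ alpha (2*n) - powerRZ beta (2*n)) / (4 * sqrt 2)))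
    \/
    (IZR t0 = 4 * F
        (powerRZ alpha (2*n+1) + powerRZ beta (2*n+1))
        ((powerRZ alpha (2*n+1) - powerRZ beta (2*n+1)) / (2 * sqrt 2)))
    \/
    (IZR t0 = F
        (sqrt 2 * (powerRZ alpha (2*n+1) - powerRZ beta (2*n+1)))
        ((powerRZ alpha (2*n+1) + powerRZ beta (2*n+1)) / 2))
    \/
    (IZR t0 = F
        (sqrt 2 * (powerRZ alpha (2*n) - powerRZ beta (2*n)))
        ((powerRZ alpha (2*n) + powerRZ beta (2*n)) / 2)).
Proof.
  intro H.
  assert (hs : sqrt 2 <> 0) by (intro h0; pose proof hr; rewrite h0 in H0; lra).
  destruct (intpart t0 x0 H) as [ht | [m [w [hp ht]]]].
  - exists 0%Z. left. subst t0. unfold F. simpl.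
    replace (1-1) with 0 by ring. unfold Rdiv. rewrite Rmult_0_l. ring.
  - apply (f_equal IZR) in ht. rewrite ?mult_IZR, ?minus_IZR, ?mult_IZR in ht.
    destruct (pell m w hp) as [e [j [he [hA hB]]]].
    destruct (Z.Even_or_Odd j) as [[n hn]|[n hn]]; subst j.
    + exists (n-1)%Z.
      replace (2*(2*n))%Z with ((2*(n-1)+1) + (2*(n-1)+1) + 2)%Z in hA, hB by ring.
      rewrite (powerRZ_add alpha (_ + _) 2%Z alpha_nz), (powerRZ_add alpha (2*(n-1)+1) (2*(n-1)+1) alpha_nz), pow2 in hA.
      rewrite (powerRZ_add beta (_ + _) 2%Z beta_nz), (powerRZ_add beta (2*(n-1)+1) (2*(n-1)+1) beta_nz), pow2 in hB.
      pose proof (prod_odd (n-1)) as hab.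
      destruct he as [-> | ->].
      * right; right; left. unfold F.
        eapply (c3 (sqrt 2)); [apply hr | exact hab | exact hA | exact hB | exact ht | reflexivity | field].
      * right; left. unfold F.
        eapply (c2 (sqrt 2)); [apply hr | exact hab | exact hA | exact hB | exact ht | reflexivity | field; auto].
    + exists n.
      replace (2*(2*n+1))%Z with ((2*n) + (2*n) + 2)%Z in hA, hB by ring.
      rewrite (powerRZ_add alpha (_ + _) 2%Z alpha_nz), (powerRZ_add alpha (2*n) (2*n) alpha_nz), pow2 in hA.
      rewrite (powerRZ_add beta (_ + _) 2%Z beta_nz), (powerRZ_add beta (2*n) (2*n) beta_nz), pow2 in hB.
      pose proof (prod_even n) as hab.
      destruct he as [-> | ->].
      * left. unfold F.
        eapply (c1 (sqrt 2)); [apply hr | exact hab | exact hA | exact hB | exact ht | field | field; auto].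
      * right; right; right. unfold F.
        eapply (c4 (sqrt 2)); [apply hr | exact hab | exact hA | exact hB | exact ht | reflexivity | field].
Qed.
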